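(* Let $G=(V,E)$ be a finite simple strongly connected directed graph and let $W\subsetneq V$ be a nonempty proper strongly connected subset. Then $\det(L_W)$ is an irreducible polynomial in the variables $(x_e)_{e\in E}$, $(y_v)_{v\in W}$ (over $\mathbb C$).
   Context: $x_e$ ($e\in E$) and $y_v$ ($v\in V$) are independent indeterminates. $Q$ is the $V\times V$ matrix with $Q_{vw}=x_e$ if $v\ne w$ and $e$ is an edge from $v$ to $w$ ($0$ if none), and $Q_{vv}=-\sum_{e:s(e)=v}x_e$. $L=Q+Y$ with $Y$ diagonal, $Y_{vv}=y_v$. $L_W$ is the principal submatrix of $L$ with rows and columns indexed by $W$. A subset $W$ is strongly connected if the induced subgraph $G_W$ is strongly connected. *)

(* Defs.v *)
From HB Require Import structures.
From mathcomp Require Import all_boot all_order all_algebra.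
Set Implicit Arguments. Unset Strict Implicit. Unset Printing Implicit Defensive.
Import GRing.Theory.
Local Open Scope ring_scope.

(* Multivariate polynomials in n variables over R, as iterated univariate
   polynomial rings: mpoly R 0 = R, mpoly R n.+1 = {poly mpoly R n}.
   Variable number k (k < n) is the indeterminate adjoined at level k.+1. *)
Fixpoint mpoly (R : idomainType) (n : nat) : idomainType :=
  match n with
  | 0 => R
  | m.+1 => ({poly mpoly R m} : idomainType)
  end.

Fixpoint mvar (R : idomainType) (n : nat) (k : nat) : mpoly R n :=
  match n return mpoly R n with
  | 0 => 0
  | m.+1 => if k == m then ('X : {poly mpoly R m}) else (mvar R m k)%:P
  end.

Definition irreducible_elt (R : idomainType) (p : R) : Prop :=
  [/\ p != 0, p \isn't a GRing.unit &
      forall a b : R, p = a * b -> a \is a GRing.unit \/ b \is a GRing.unit].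

Section Graph.
Variables (V : finType) (r : rel V) (W : {set V}).

(* edges of the digraph (no multi-edges since r is a relation) *)
Definition edge_pred : pred (V * V) := fun e => r e.1 e.2.
Definition Edge : finType := {e : V * V | edge_pred e}.
Definition Wpred : pred V := fun v => v \in W.
Definition Wvert : finType := {v : V | Wpred v}.

(* variable index set: the x_e (e in E) and the y_v (v in W) *)
Definition Var : finType := (Edge + Wvert)%type.

Definition PolyRing (C : idomainType) := mpoly C #|Var|.

Definition X (C : idomainType) (i : Var) : PolyRing C :=
  mvar C #|Var| (enum_rank i).

Definition xvar (C : idomainType) (v w : V) : PolyRing C :=
  if @insub _ edge_pred Edge (v, w) is Some e then X C (inl e) else 0.

Definition yvar (C : idomainType) (v : V) : PolyRing C :=
  if @insub _ Wpred Wvert v is Some u then X C (inr u) else 0.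

Definition Lentry (C : idomainType) (v w : V) : PolyRing C :=
  if v == w then yvar C v - \sum_(u | r v u) xvar C v u
  else xvar C v w.

Definition LW (C : idomainType) : 'M[PolyRing C]_#|W| :=
  \matrix_(i, j) Lentry C (enum_val i) (enum_val j).

End Graph.

Definition strongly_connected (V : finType) (r : rel V) : Prop :=
  forall u w : V, connect r u w.

Definition strongly_connected_set (V : finType) (r : rel V) (W : {set V}) : Prop :=
  forall u w : V, u \in W -> w \in W ->
    connect [rel a b | [&& a \in W, b \in W & r a b]] u w.

(* Main.v *)
Require Import Defs.
From HB Require Import structures.
From mathcomp Require Import all_boot all_order all_algebra all_fingroup.
From mathcomp Require Import zify ring lra.
Set Implicit Arguments. Unset Strict Implicit. Unset Printing Implicit Defensive.
Import GRing.Theory.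
Local Open Scope ring_scope.

Section Deg.
Variable R : idomainType.

Fixpoint degk (n k : nat) {struct n} : mpoly R n -> nat :=
  match n return mpoly R n -> nat with
  | 0 => fun _ => 0%N
  | m.+1 => fun p : {poly mpoly R m} =>
      if k == m then (size p).-1 else \max_(i < size p) @degk m k (p`_i)
  end.
Arguments degk : clear implicits.

Lemma degkS m k (p : {poly mpoly R m}) :
  degk m.+1 k p = if k == m then (size p).-1 else \max_(i < size p) degk m k (p`_i).
Proof. by []. Qed.

Lemma degk0 n k : degk n k 0 = 0%N.
Proof.
case: n => [//|m]; rewrite degkS size_poly0; case: ifP => // _.
by rewrite big_ord0.
Qed.

Lemma degk_coef m k (p : {poly mpoly R m}) i : k != m ->
  (degk m k (p`_i) <= degk m.+1 k p)%N.
Proof.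
move=> km; rewrite degkS (negbTE km).
case: (ltnP i (size p)) => hi.
  exact: (leq_bigmax (Ordinal hi)).
by rewrite nth_default // degk0.
Qed.

Lemma degk_coefP m k (p : {poly mpoly R m}) d : k != m ->
  (forall i, degk m k (p`_i) <= d)%N -> (degk m.+1 k p <= d)%N.
Proof.
move=> km H; rewrite degkS (negbTE km).
by apply/bigmax_leqP => i _.
Qed.

Lemma degkC m k (c : mpoly R m) :
  degk m.+1 k (c%:P : {poly mpoly R m}) = if k == m then 0%N else degk m k c.
Proof.
case: ifP => km.
  by rewrite degkS km; move: (size_polyC_leq1 c); case: (size _) => [|[|]].
apply/eqP; rewrite eqn_leq; apply/andP; split.
  apply: degk_coefP; first by rewrite km.
  by move=> i; rewrite coefC; case: ifP => _; rewrite ?degk0.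
by have := degk_coef (c%:P) 0 (negbT km); rewrite coefC eqxx.
Qed.

Lemma degk_ge n k (p : mpoly R n) : (n <= k)%N -> degk n k p = 0%N.
Proof.
elim: n p => [//|m IH] p hk.
rewrite degkS (_ : (k == m) = false); last by apply/negbTE; apply/eqP; lia.
apply/eqP; rewrite -leqn0; apply/bigmax_leqP => i _.
by rewrite IH // ltnW.
Qed.

Lemma degkN n k (p : mpoly R n) : degk n k (- p) = degk n k p.
Proof.
elim: n p => [//|m IH] p.
rewrite !degkS size_polyN; case: ifP => // _.
by apply: eq_bigr => i _; rewrite coefN IH.
Qed.

Lemma degkD n k (p q : mpoly R n) : (degk n k (p + q) <= maxn (degk n k p) (degk n k q))%N.
Proof.
elim: n p q => [//|m IH] p q.
case: (eqVneq k m) => km.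
  rewrite !degkS km eqxx.
  have := size_polyD p q.
  move: (size (p + q)) (size p) (size q) => a b c h.
  lia.
apply: degk_coefP => // i; rewrite coefD.
apply: leq_trans (IH _ _) _.
by rewrite geq_max !leq_max !degk_coef ?orbT.
Qed.

Lemma degkB_lt n k (a b : mpoly R n) : (degk n k b < degk n k a)%N ->
  degk n k (a + b) = degk n k a.
Proof.
move=> h; apply/eqP; rewrite eqn_leq; apply/andP; split.
  by apply: leq_trans (degkD _ _ _) _; rewrite geq_max leqnn ltnW.
have := degkD k (a + b) (- b); rewrite addrK degkN => h2.
move: h2 h; lia.
Qed.

Lemma degk_sum n k I (r : seq I) (P : pred I) (F : I -> mpoly R n) d :
  (forall i, P i -> degk n k (F i) <= d)%N -> (degk n k (\sum_(i <- r | P i) F i) <= d)%N.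
Proof.
move=> H; apply: (big_ind (fun x => degk n k x <= d)%N) => //.
  by rewrite degk0.
by move=> x y hx hy; apply: leq_trans (degkD _ _ _) _; rewrite geq_max hx.
Qed.

Lemma degk_sum_lt n k I (r : seq I) (P : pred I) (F : I -> mpoly R n) d :
  (0 < d)%N -> (forall i, P i -> degk n k (F i) < d)%N -> (degk n k (\sum_(i <- r | P i) F i) < d)%N.
Proof.
move=> d0 H; apply: (big_ind (fun x => degk n k x < d)%N) => //.
  by rewrite degk0.
by move=> x y hx hy; apply: leq_ltn_trans (degkD _ _ _) _; rewrite gtn_max hx.
Qed.

Lemma degk_witness m k (p : {poly mpoly R m}) : k != m -> p != 0 ->
  exists i, (p`_i != 0) && (degk m k (p`_i) == degk m.+1 k p).
Proof.
move=> km p0.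
have sp : (0 < size p)%N by rewrite size_poly_gt0.
have [i0 Hi0] := eq_bigmax (fun i : 'I_(size p) => degk m k (p`_i)) (ltac:(by rewrite card_ord)).
case: (eqVneq (p`_i0) 0) => hi0.
  exists (size p).-1; rewrite -lead_coefE lead_coef_eq0 p0 /= (negbTE km) Hi0 hi0 degk0.
  rewrite -leqn0; have := degk_coef p (size p).-1 km.
  by rewrite degkS (negbTE km) Hi0 hi0 degk0 -lead_coefE.
by exists i0; rewrite hi0 /= (negbTE km) Hi0.
Qed.

Lemma degkM n k (p q : mpoly R n) : p != 0 -> q != 0 ->
  degk n k (p * q) = (degk n k p + degk n k q)%N.
Proof.
elim: n p q => [//|m IH] p q p0 q0.
have le_all : forall a b : mpoly R m, (degk m k (a * b) <= degk m k a + degk m k b)%N.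
  move=> a b; case: (eqVneq a 0) => [->|a0]; first by rewrite mul0r degk0.
  case: (eqVneq b 0) => [->|b0]; first by rewrite mulr0 degk0.
  by rewrite IH.
case: (eqVneq k m) => km.
  rewrite !degkS km eqxx size_mul //.
  have : (0 < size p)%N by rewrite size_poly_gt0.
  have : (0 < size q)%N by rewrite size_poly_gt0.
  move: (size p) (size q) => a b; case: a => [|a]; case: b => [|b] //= _ _; rewrite addnS /=; lia.
apply/eqP; rewrite eqn_leq; apply/andP; split.
  apply: degk_coefP => // i; rewrite coefM.
  apply: degk_sum => j _; apply: leq_trans (le_all _ _) _.
  by apply: leq_add; apply: degk_coef.
set Dp := degk m.+1 k p; set Dq := degk m.+1 k q.
case: (posnP (Dp + Dq)) => [->//|Dpos].
have exP := degk_witness km p0.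
have ubP : forall i, (p`_i != 0) && (degk m k (p`_i) == Dp) -> (i <= size p)%N.
  move=> i /andP[h _]; apply: ltnW; case: (ltnP i (size p)) => // hi.
  by rewrite nth_default // eqxx in h.
have exQ := degk_witness km q0.
have ubQ : forall i, (q`_i != 0) && (degk m k (q`_i) == Dq) -> (i <= size q)%N.
  move=> i /andP[h _]; apply: ltnW; case: (ltnP i (size q)) => // hi.
  by rewrite nth_default // eqxx in h.
case: (ex_maxnP exP ubP) => i0 /andP[pi0 di0] maxi0.
case: (ex_maxnP exQ ubQ) => j0 /andP[qj0 dj0] maxj0.
apply: leq_trans (degk_coef (p * q) (i0 + j0) km).
rewrite coefM.
have hi0 : (i0 < (i0 + j0).+1)%N by lia.
rewrite (bigD1 (Ordinal hi0)) //= addKn degkB_lt.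
  by rewrite IH // (eqP di0) (eqP dj0).
rewrite IH // (eqP di0) (eqP dj0).
apply: degk_sum_lt => // j hj.
have hj' : (j : nat) != i0 by apply: contra hj => /eqP h; apply/eqP/val_inj.
case: (eqVneq (p`_j) 0) => [->|pj0]; first by rewrite mul0r degk0.
case: (eqVneq (q`_(i0 + j0 - j)) 0) => [->|qj]; first by rewrite mulr0 degk0.
rewrite IH //.
have lep : (degk m k (p`_j) <= Dp)%N by apply: degk_coef.
have leq' : (degk m k (q`_(i0 + j0 - j)) <= Dq)%N by apply: degk_coef.
move: lep leq'; rewrite /Dp /Dq => lep leq'.
case: (ltngtP j i0) => [ltj|gtj|eqj]; last by rewrite eqj eqxx in hj'.
  have : degk m k (q`_(i0 + j0 - j)) != degk m.+1 k q.
    apply/negP => hd; have HH : (q`_(i0 + j0 - j) != 0) && (degk m k (q`_(i0 + j0 - j)) == degk m.+1 k q) by rewrite qj hd.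
    have := maxj0 _ HH.
    lia.
  move=> ne; have lt : (degk m k (q`_(i0+j0-j)) < degk m.+1 k q)%N by rewrite ltn_neqAle ne leq'.
  by apply: leq_ltn_trans (leq_add lep (leqnn _)) _; rewrite ltn_add2l.
have : degk m k (p`_j) != degk m.+1 k p.
  apply/negP => hd; have HH : (p`_j != 0) && (degk m k (p`_j) == degk m.+1 k p) by rewrite pj0 hd.
  have := maxi0 _ HH.
  lia.
move=> ne; have lt : (degk m k (p`_j) < degk m.+1 k p)%N by rewrite ltn_neqAle ne lep.
by apply: leq_ltn_trans (leq_add (leqnn _) leq') _; rewrite ltn_add2r.
Qed.

Lemma degkM_le n k (p q : mpoly R n) : (degk n k (p * q) <= degk n k p + degk n k q)%N.
Proof.
case: (eqVneq p 0) => [->|p0]; first by rewrite mul0r degk0.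
case: (eqVneq q 0) => [->|q0]; first by rewrite mulr0 degk0.
by rewrite degkM.
Qed.


Lemma degk1 n k : degk n k 1 = 0%N.
Proof.
elim: n => [//|m IH]; rewrite (_ : 1 = (1 : mpoly R m)%:P) //.
by rewrite degkC IH; case: ifP.
Qed.

Lemma degk_mvar n k j : (j < n)%N -> degk n k (mvar R n j) = (k == j).
Proof.
elim: n => [//|m IH] hj.
have -> : mvar R m.+1 j = if j == m then 'X else (mvar R m j)%:P by [].
case: (eqVneq j m) => [->|jm].
  case: (eqVneq k m) => [->|km]; first by rewrite degkS eqxx size_polyX.
  rewrite degkS (negbTE km); apply/eqP; rewrite -leqn0; apply/bigmax_leqP => i _.
  by rewrite coefX; case: eqP; rewrite ?degk1 ?degk0.
rewrite degkC IH; last by move: hj jm; rewrite ltnS leq_eqVlt => /orP[/eqP->|]; rewrite ?eqxx.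
by case: (eqVneq k m) => [->|//]; rewrite eq_sym (negbTE jm).
Qed.

Lemma degk_prod n k I (r : seq I) (P : pred I) (F : I -> mpoly R n) :
  (degk n k (\prod_(i <- r | P i) F i) <= \sum_(i <- r | P i) degk n k (F i))%N.
Proof.
apply: (big_ind2 (fun x y => degk n k x <= y)%N); first by rewrite degk1.
  by move=> a b c d h1 h2; apply: leq_trans (degkM_le _ _ _) _; apply: leq_add.
by [].
Qed.

Lemma degk_unit n k (u : mpoly R n) : u \is a GRing.unit -> degk n k u = 0%N.
Proof.
move=> hu; have u0 : u != 0 by apply: contraTneq hu => ->; rewrite unitr0.
have v0 : u^-1 != 0 by rewrite invr_eq0.
have := degkM k u0 v0; rewrite mulrV // degk1.
by case: (degk n k u).
Qed.

End Deg.
Arguments degk {R} n k _.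

Section Ev.
Variable R : idomainType.
Lemma cm (S : comNzRingType) (A : nzRingType) (f : A -> S) u : commr_rmorph f u.
Proof. by move=> x; rewrite /GRing.comm mulrC. Qed.
Fixpoint ev (n : nat) (s : nat -> R) {struct n} : {rmorphism mpoly R n -> R} :=
  match n return {rmorphism mpoly R n -> R} with
  | 0 => (idfun : {rmorphism R -> R})
  | m.+1 => (horner_morph (@cm R _ (ev m s) (s m)) : {rmorphism {poly mpoly R m} -> R})
  end.
Lemma evS m s (p : {poly mpoly R m}) : ev m.+1 s p = (map_poly (ev m s) p).[s m].
Proof. by []. Qed.

Lemma ev_mvar n s j : (j < n)%N -> ev n s (mvar R n j) = s j.
Proof.
elim: n => [//|m IH] hj.
have -> : mvar R m.+1 j = if j == m then 'X else (mvar R m j)%:P by [].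
rewrite evS; case: (eqVneq j m) => [->|jm].
  by rewrite map_polyX hornerX.
rewrite map_polyC hornerC; apply: IH.
by move: hj jm; rewrite ltnS leq_eqVlt => /orP[/eqP->|]; rewrite ?eqxx.
Qed.

Lemma ev_free n k s s' (p : mpoly R n) : degk n k p = 0%N ->
  (forall j, (j < n)%N -> j != k -> s j = s' j) -> ev n s p = ev n s' p.
Proof.
elim: n k s s' p => [//|m IH] k s s' p hd hs.
rewrite !evS.
case: (eqVneq k m) => [ekm|km].
  move: hd; rewrite degkS ekm eqxx => hd.
  have sz : (size p <= 1)%N by move: hd; case: (size p) => [|[|]].
  rewrite (size1_polyC sz) !map_polyC !hornerC.
  apply: (IH m) => //; first by rewrite degk_ge.
  by move=> j hj _; apply: hs; [rewrite ltnW | rewrite ekm neq_ltn hj].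
rewrite (hs m) //; last by rewrite eq_sym.
have -> : map_poly (ev m s) p = map_poly (ev m s') p; last by [].
apply/polyP => i; rewrite !coef_map.
apply: (IH k) => //.
  by apply/eqP; rewrite -leqn0 -hd; apply: degk_coef.
by move=> j hj jk; apply: hs => //; rewrite ltnW.
Qed.

End Ev.
Arguments ev {R} n s.

Section Unit.
Variable F : fieldType.
Lemma deg0_unit n (g : mpoly F n) : (forall k, (k < n)%N -> degk n k g = 0%N) -> g != 0 ->
  g \is a GRing.unit.
Proof.
elim: n g => [|m IH] g hd g0; first by rewrite unitfE.
have sz1 : size g = 1%N.
  have := hd m (ltnSn m); rewrite degkS eqxx.
  by move: g0; rewrite -size_poly_eq0; case: (size g) => [|[|]].
change (g \is a GRing.unit) with ((g : {poly mpoly F m}) \is a GRing.unit).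
rewrite poly_unitE sz1 eqxx /=; apply: IH.
  move=> k hk; apply/eqP; rewrite -leqn0 -(hd k (ltnW hk)).
  by apply: degk_coef; rewrite neq_ltn hk.
have := lead_coef_eq0 g; rewrite lead_coefE sz1 /= => ->.
by rewrite -size_poly_eq0 sz1.
Qed.
End Unit.

Section Det.
Variable R : comNzRingType.

Lemma prod_zero n (F : 'I_n -> R) i : F i = 0 -> \prod_j F j = 0.
Proof. by move=> h; rewrite (bigD1 i) //= h mul0r. Qed.

Lemma det_D1 n (A : 'M[R]_n) (a : 'I_n) :
  (forall i j, i != a -> A i j = (i == j)%:R) -> \det A = A a a.
Proof.
move=> hA; rewrite /determinant (bigD1 1%g) //=.
rewrite [X in _ + X]big1 ?addr0; last first.
  move=> s s1.
  have [i [ia si]] : exists i, i != a /\ s i != i.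
    have [i0 hi0] : exists i0, s i0 != i0.
      apply/existsP; apply: contraR s1 => /existsPn h; apply/eqP/permP => i.
      by rewrite perm1; move: (h i); rewrite negbK => /eqP.
    case: (eqVneq i0 a) => [ea|i0a]; last by exists i0.
    exists (s i0); split; first by rewrite -ea.
    by apply: contra hi0 => /eqP /perm_inj ->.
  by rewrite (prod_zero (i := i)) ?mulr0 // hA // eq_sym (negbTE si).
rewrite odd_perm1 expr0 mul1r (bigD1 a) //= big1 ?mulr1 ?perm1 //.
by move=> i /= ia; rewrite perm1 hA // eqxx.
Qed.

Lemma det_D2 n (A : 'M[R]_n) (p : 'S_n) : p != 1%g ->
  (forall s : 'S_n, (forall i, (s i == i) || (s i == p i)) -> (s == 1%g) || (s == p)) ->
  (forall i j, j != i -> j != p i -> A i j = 0) ->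
  \det A = \prod_i A i i + (-1) ^+ p * \prod_i A i (p i).
Proof.
move=> p1 hs hA; rewrite /determinant (bigD1 1%g) //= (bigD1 p) //=.
rewrite [X in _ + (_ + X)]big1 ?addr0.
  by rewrite odd_perm1 expr0 mul1r; congr (_ + _); apply: eq_bigr => i _; rewrite perm1.
move=> s /andP[s1 sp].
have [i /andP[h1 h2]] : exists i, (s i != i) && (s i != p i).
  apply/existsP; apply: contraR s1 => /existsPn h.
  have := hs s; rewrite (negbTE sp) orbF; apply => i.
  by move: (h i); rewrite negb_and !negbK.
by rewrite (prod_zero (i := i)) ?mulr0 // hA.
Qed.

End Det.

Lemma get_cycle (V : finType) (e : rel V) u w : e u w -> connect e w u ->
  exists c : seq V, [/\ uniq c, u \in c, next c u = w & path.cycle e c].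
Proof.
move=> euw /connectP[p pth eu]; subst u.
move: euw; case: (shortenP pth) => p' pth' uq _ euw.
exists (w :: p'); split => //.
- exact: mem_last.
- by rewrite next_nth mem_last (index_last uq) nth_default.
- by rewrite /path.cycle rcons_path pth' euw.
Qed.

Section Cycle.
Variables (V : finType) (W : {set V}) (x0 : V) (hx0 : x0 \in W) (c : seq V).
Hypotheses (uc : uniq c) (cW : {subset c <= W}) (nn : forall x, x \in c -> next c x != x).

Lemma next_W x : x \in W -> next c x \in W.
Proof.
move=> hx; case: (boolP (x \in c)) => hc; first by apply: cW; rewrite mem_next.
by rewrite next_nth (negbTE hc).
Qed.

Definition pf (i : 'I_#|W|) : 'I_#|W| := enum_rank_in hx0 (next c (enum_val i)).
Lemma pfE i : enum_val (pf i) = next c (enum_val i).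
Proof. by rewrite /pf enum_rankK_in // next_W // enum_valP. Qed.

Lemma pf_inj : injective pf.
Proof.
move=> i j h; apply: enum_val_inj; apply: (can_inj (prev_next uc)).
by rewrite -!pfE h.
Qed.
Definition pc : 'S_#|W| := perm pf_inj.
Lemma pcE i : enum_val (pc i) = next c (enum_val i).
Proof. by rewrite permE pfE. Qed.

Lemma iter_pc k i : enum_val (iter k pc i) = iter k (next c) (enum_val i).
Proof. by elim: k => [//|k IH] /=; rewrite pcE IH. Qed.

Lemma pc_fix i : (pc i == i) = (enum_val i \notin c).
Proof.
apply/idP/idP.
  by move=> /eqP h; apply/negP => hc; have := nn hc; rewrite -pcE h eqxx.
by move=> hc; apply/eqP/enum_val_inj; rewrite pcE next_nth (negbTE hc).
Qed.

Lemma pc_cyc (s : 'S_#|W|) : (forall i, (s i == i) || (s i == pc i)) -> (s == 1%g) || (s == pc).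
Proof.
move=> hs; case: (boolP [exists i, s i != i]) => [/existsP[i0 hi0]|]; last first.
  move=> /existsPn h; apply/orP; left; apply/eqP/permP => i; rewrite perm1.
  by move: (h i); rewrite negbK => /eqP.
apply/orP; right.
have si0 : s i0 = pc i0 by move: (hs i0); rewrite (negbTE hi0) => /eqP.
have ci0 : enum_val i0 \in c.
  by have := pc_fix i0; rewrite -si0 (negbTE hi0) => /esym /negbFE.
have inc : forall k, enum_val (iter k pc i0) \in c.
  move=> k; rewrite iter_pc -(fconnect_cycle (cycle_next uc) ci0).
  exact: fconnect_iter.
have key : forall k, s (iter k pc i0) = pc (iter k pc i0).
  elim => [//|k IH] /=.
  move: (hs (pc (iter k pc i0))) => /orP[/eqP h|/eqP //].
  have := pc_fix (iter k pc i0); rewrite inc /= => H.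
  have e : pc (iter k pc i0) = iter k pc i0 by apply: (@perm_inj _ s); rewrite h IH.
  by rewrite e eqxx in H.
apply/eqP/permP => j; case: (boolP (enum_val j \in c)) => hj.
  have : fconnect (next c) (enum_val i0) (enum_val j).
    by rewrite (fconnect_cycle (cycle_next uc) ci0).
  move/iter_findex => hk.
  have <- : iter (findex (next c) (enum_val i0) (enum_val j)) pc i0 = j.
    by apply: enum_val_inj; rewrite iter_pc hk.
  exact: key.
have pj : pc j = j by apply/eqP; rewrite pc_fix hj.
by move: (hs j); rewrite pj orbb => /eqP.
Qed.

End Cycle.

Lemma rank1 (R : idomainType) n (f g : mpoly R n) (k1 k2 : nat) s11 s12 s21 s22 :
  degk n k2 f = 0%N -> degk n k1 g = 0%N ->
  (forall j, (j < n)%N -> j != k2 -> s11 j = s12 j) ->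
  (forall j, (j < n)%N -> j != k2 -> s21 j = s22 j) ->
  (forall j, (j < n)%N -> j != k1 -> s11 j = s21 j) ->
  (forall j, (j < n)%N -> j != k1 -> s12 j = s22 j) ->
  ev n s11 (f * g) * ev n s22 (f * g) = ev n s12 (f * g) * ev n s21 (f * g).
Proof.
move=> hf hg h1 h2 h3 h4; rewrite !rmorphM /=.
rewrite (ev_free hf h1) (ev_free hg h3) -(ev_free hf h2) -(ev_free hg h4).
ring.
Qed.

Section Main.
Variables (C : fieldType) (V : finType) (r : rel V) (W : {set V}).
Local Notation n := #|Var r W|.
Local Notation PR := (PolyRing r W C).
Local Notation P := (\det (LW r W C)).

Definition sv (Phi : Var r W -> C) : nat -> C :=
  fun k => if (insub k : option 'I_n) is Some i then Phi (enum_val i) else 0.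

Lemma sv_rank Phi z : sv Phi (enum_rank z) = Phi z.
Proof. by rewrite /sv valK enum_rankK. Qed.

Lemma ev_X Phi z : ev n (sv Phi) (X C z) = Phi z.
Proof. by rewrite /X ev_mvar ?sv_rank. Qed.

Lemma sv_agree Phi Phi' z0 : (forall z, z != z0 -> Phi z = Phi' z) ->
  forall j, (j < n)%N -> j != enum_rank z0 -> sv Phi j = sv Phi' j.
Proof.
move=> h j hj hj0; rewrite /sv insubT /=; apply: h.
by apply: contra hj0 => /eqP <-; rewrite enum_valK.
Qed.

Definition Phi (fx : V -> V -> C) (fy : V -> C) (z : Var r W) : C :=
  match z with inl e => fx (val e).1 (val e).2 | inr v => fy (val v) end.

Lemma ev_xvar fx fy v w : ev n (sv (Phi fx fy)) (xvar r W C v w) = if r v w then fx v w else 0.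
Proof.
rewrite /xvar; case: insubP => [e he ve|hn].
  by rewrite ev_X /= ve; move: he; rewrite /edge_pred /= => ->.
by rewrite rmorph0; move: hn; rewrite /edge_pred /= => /negbTE ->.
Qed.

Lemma ev_yvar fx fy v : ev n (sv (Phi fx fy)) (yvar r W C v) = if v \in W then fy v else 0.
Proof.
rewrite /yvar; case: insubP => [e he ve|hn].
  by rewrite ev_X /= ve; move: he; rewrite /Wpred /= => ->.
by rewrite rmorph0; move: hn; rewrite /Wpred /= => /negbTE ->.
Qed.

Definition Mx (fx : V -> V -> C) (fy : V -> C) : 'M[C]_#|W| :=
  \matrix_(i, j) (if enum_val i == enum_val j
     then fy (enum_val i) - \sum_(u | r (enum_val i) u) fx (enum_val i) u
     else if r (enum_val i) (enum_val j) then fx (enum_val i) (enum_val j) else 0).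

Lemma evP fx fy : ev n (sv (Phi fx fy)) P = \det (Mx fx fy).
Proof.
rewrite -det_map_mx; congr (determinant _); apply/matrixP => i j; rewrite !mxE /Lentry.
case: eqP => _; last by rewrite ev_xvar.
rewrite rmorphB rmorph_sum /= ev_yvar enum_valP; congr (_ - _).
by apply: eq_bigr => u hu; rewrite ev_xvar hu.
Qed.

Lemma degk_sign (R : idomainType) m k (b : bool) : degk m k ((-1 : mpoly R m) ^+ b) = 0%N.
Proof. by case: b; rewrite ?expr0 ?expr1 ?degkN degk1. Qed.

Definition row (z : Var r W) : V := match z with inl e => (val e).1 | inr v => val v end.

Lemma degk_X (z z' : Var r W) : degk n (enum_rank z) (X C z') = (z == z').
Proof. by rewrite /X degk_mvar // val_eqE (inj_eq enum_rank_inj). Qed.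

Lemma degk_xvar (z : Var r W) v w : (degk n (enum_rank z) (xvar r W C v w) <= (v == row z))%N.
Proof.
rewrite /xvar; case: insubP => [e _ ve|_]; last by rewrite degk0.
by rewrite degk_X; case: eqP => // ->; rewrite /= ve eqxx.
Qed.

Lemma degk_yvar (z : Var r W) v : (degk n (enum_rank z) (yvar r W C v) <= (v == row z))%N.
Proof.
rewrite /yvar; case: insubP => [e _ ve|_]; last by rewrite degk0.
by rewrite degk_X; case: eqP => // ->; rewrite /= ve eqxx.
Qed.

Lemma degk_Lentry (z : Var r W) v w : (degk n (enum_rank z) (Lentry r W C v w) <= (v == row z))%N.
Proof.
rewrite /Lentry; case: eqP => _; last exact: degk_xvar.
apply: leq_trans (degkD _ _ _) _; rewrite geq_max degk_yvar degkN /=.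
by apply: degk_sum => u _; apply: degk_xvar.
Qed.

Lemma degk_det_le (A : 'M[PR]_#|W|) k (cc : 'I_#|W| -> nat) :
  (forall i j, degk n k (A i j) <= cc i)%N -> (degk n k (\det A) <= \sum_i cc i)%N.
Proof.
move=> h; rewrite /determinant; apply: degk_sum => s _.
apply: leq_trans (degkM_le _ _ _) _.
rewrite degk_sign.
rewrite add0n; apply: leq_trans (degk_prod _ _ _ _) _.
by apply: leq_sum => i _; exact: h.
Qed.

Lemma degP (z : Var r W) : (degk n (enum_rank z) P <= \sum_(i < #|W|) (enum_val i == row z))%N.
Proof. by apply: degk_det_le => i j; rewrite mxE degk_Lentry. Qed.

Lemma degP_le1 (z : Var r W) : (degk n (enum_rank z) P <= 1)%N.
Proof.
apply: leq_trans (degP z) _.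
case: (boolP (row z \in W)) => hz.
  pose i0 := enum_rank_in hz (row z).
  rewrite (bigD1 i0) //= enum_rankK_in // eqxx big1 //.
  move=> i hi; apply/eqP; rewrite eqb0; apply: contra hi => /eqP e.
  by apply/eqP; apply: enum_val_inj; rewrite /i0 enum_rankK_in //; apply/eqP.
by rewrite big1 // => i _; apply/eqP; rewrite eqb0; apply: contra hz => /eqP <-; apply: enum_valP.
Qed.

Lemma degP_out (z : Var r W) : row z \notin W -> degk n (enum_rank z) P = 0%N.
Proof.
move=> hz; apply/eqP; rewrite -leqn0; apply: leq_trans (degP z) _.
by rewrite big1 // => i _; apply/eqP; rewrite eqb0; apply: contra hz => /eqP <-; apply: enum_valP.
Qed.


Lemma detV1 v (hv : v \in W) t :
  \det (Mx (fun _ _ => 0) (fun x => if x == v then t else 1)) = t.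
Proof.
pose a := enum_rank_in hv v.
have ea : enum_val a = v by rewrite /a enum_rankK_in.
rewrite (det_D1 (a := a)).
  by rewrite mxE ea !eqxx big1 ?subr0.
move=> i j ia; rewrite mxE.
have hvi : enum_val i != v.
  by apply: contra ia => /eqP e; apply/eqP/enum_val_inj; rewrite ea.
rewrite -(inj_eq enum_val_inj); case: eqP => [e|ne]; last by case: ifP.
by rewrite (negbTE hvi) big1 ?subr0.
Qed.

Lemma detV2 a b (ha : a \in W) (hab : r a b) s t :
  \det (Mx (fun x y => if (x == a) && (y == b) then t else 0)
           (fun x => if x == a then s else 1)) = s - t.
Proof.
pose ia := enum_rank_in ha a.
have ea : enum_val ia = a by rewrite /ia enum_rankK_in.
rewrite (det_D1 (a := ia)).
  rewrite mxE ea !eqxx (bigD1 b) //= !eqxx big1 ?addr0 //.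
  by move=> u /andP[_ ub]; rewrite (negbTE ub).
move=> i j hi; rewrite mxE.
have hai : enum_val i != a.
  by apply: contra hi => /eqP e; apply/eqP/enum_val_inj; rewrite ea.
rewrite -(inj_eq enum_val_inj) (negbTE hai) /=; case: eqP => [e|ne]; last by case: ifP.
by rewrite big1 ?subr0.
Qed.

Section Cyc.
Variables (c : seq V) (u w : V) (hu : u \in W) (uc : uniq c) (cW : {subset c <= W}).
Hypotheses (cyc : forall x, x \in c -> r x (next c x)) (nn : forall x, x \in c -> next c x != x).
Hypotheses (uin : u \in c) (win : w \in c) (uw : u != w).

Definition fxc (x y : V) : C := if (x \in c) && (y == next c x) then 1 else 0.
Definition fyc (s t : C) (x : V) : C :=
  if x == u then s else if x == w then t else 1 + (x \in c)%:R.

Lemma sum_fxc x : \sum_(y | r x y) fxc x y = (x \in c)%:R.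
Proof.
case: (boolP (x \in c)) => hx.
  rewrite (bigD1 (next c x)) ?cyc //= /fxc hx eqxx big1 ?addr0 //.
  by move=> y /andP[_ ny]; rewrite (negbTE ny).
by rewrite big1 // => y _; rewrite /fxc (negbTE hx).
Qed.

Local Notation pi := (@pc V W u hu c uc cW).

Lemma detV3 s t : \det (Mx fxc (fyc s t)) = (s - 1) * (t - 1) + (-1) ^+ pi.
Proof.
have hw : w \in W by apply: cW.
pose iu := enum_rank_in hu u.
pose iw := enum_rank_in hu w.
have eu : enum_val iu = u by rewrite /iu enum_rankK_in.
have ew : enum_val iw = w by rewrite /iw enum_rankK_in.
have iuw : iu != iw by apply: contra uw => /eqP e; rewrite -eu -ew e.
rewrite (det_D2 (p := pi)).
- have -> : \prod_i (Mx fxc (fyc s t)) i (pi i) = 1.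
    rewrite big1 // => i _; rewrite mxE.
    case: (boolP (enum_val i \in c)) => hic.
      have : pi i != i by rewrite (pc_fix hu uc cW nn) hic.
      rewrite -(inj_eq enum_val_inj) eq_sym => /negbTE ->.
      by rewrite pcE cyc // /fxc hic eqxx.
    have pii : pi i = i by apply/eqP; rewrite (pc_fix hu uc cW nn) hic.
    rewrite pii eqxx sum_fxc (negbTE hic) /fyc.
    have -> : (enum_val i == u) = false by apply/negbTE; apply: contra hic => /eqP ->.
    have -> : (enum_val i == w) = false by apply/negbTE; apply: contra hic => /eqP ->.
    have E : forall b : bool, ~~ b -> 1 + b%:R - false%:R = 1 :> C.
      by case=> // _; rewrite addr0 subr0.
    exact: (E _ hic).
  rewrite mulr1; congr (_ + _).
  rewrite (bigD1 iu) //= (bigD1 iw) 1?eq_sym //= big1 ?mulr1.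
    rewrite !mxE !eqxx !sum_fxc eu ew /fyc eqxx [w == u]eq_sym (negbTE uw) eqxx.
    have E : forall b1 b2 : bool, b1 -> b2 -> (s - b1%:R) * (t - b2%:R) = (s - 1) * (t - 1) by do 2 case.
    exact: E.
  move=> i /andP[hiu hiw]; rewrite mxE eqxx sum_fxc /fyc.
  have -> : (enum_val i == u) = false.
    by apply/negbTE; apply: contra hiu => /eqP e; apply/eqP/enum_val_inj; rewrite e eu.
  have -> : (enum_val i == w) = false.
    by apply/negbTE; apply: contra hiw => /eqP e; apply/eqP/enum_val_inj; rewrite e ew.
  by rewrite addrK.
- apply/eqP => e; have := pc_fix hu uc cW nn iu; rewrite e perm1 eqxx eu uin.
  by [].
- exact: pc_cyc.
- move=> i j ji jp; rewrite mxE.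
  rewrite (inj_eq enum_val_inj) eq_sym (negbTE ji) /fxc -(pcE hu uc cW).
  by rewrite (inj_eq enum_val_inj) (negbTE jp) andbF; case: ifP.
Qed.

End Cyc.

Definition kY (v : V) : nat :=
  if @insub _ (Wpred W) (Wvert W) v is Some u then enum_rank (inr u : Var r W) else 0%N.

Lemma kYE v (hv : v \in W) : kY v = enum_rank (inr (Sub v hv : Wvert W) : Var r W).
Proof. by rewrite /kY insubT. Qed.

Lemma Phi_agree_y fx fy fy' v (hv : v \in W) :
  (forall x, x != v -> fy x = fy' x) ->
  forall z, z != (inr (Sub v hv : Wvert W) : Var r W) -> Phi fx fy z = Phi fx fy' z.
Proof.
move=> h [e|u] hz //=; apply: h; apply: contra hz => /eqP e.
by apply/eqP; congr inr; apply: val_inj.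
Qed.

Lemma Phi_agree_x fx fx' fy (e0 : Edge r) :
  (forall x y, (x, y) != val e0 -> fx x y = fx' x y) ->
  forall z, z != (inl e0 : Var r W) -> Phi fx fy z = Phi fx' fy z.
Proof.
move=> h [e|u] hz //=; apply: h; apply: contra hz => /eqP e1.
by apply/eqP; congr inl; apply: val_inj; rewrite -e1; case: e {e1} => [[x y] ?].
Qed.

Lemma evP1 v (hv : v \in W) t :
  ev n (sv (Phi (fun _ _ => 0) (fun x => if x == v then t else 1))) P = t.
Proof. by rewrite evP detV1. Qed.

Lemma P_neq0 v (hv : v \in W) : P != 0.
Proof. by apply/eqP => h; have := evP1 hv 1; rewrite h rmorph0 => /eqP; rewrite eq_sym oner_eq0. Qed.

Lemma degY v (hv : v \in W) : (0 < degk n (kY v) P)%N.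
Proof.
rewrite (kYE hv) lt0n; apply/negP => /eqP h0.
have ag : forall x, x != v -> (fun x => if x == v then (0 : C) else 1) x = (fun x => if x == v then 1 else 1) x.
  by move=> x /negbTE /= ->.
have := ev_free h0 (sv_agree (@Phi_agree_y (fun _ _ => 0) _ _ v hv ag)).
by rewrite !(evP1 hv) => /eqP; rewrite eq_sym oner_eq0.
Qed.

Section Factor.
Hypothesis irr : irreflexive r.
Hypothesis hsc : strongly_connected_set r W.
Variables (f g : PR).
Hypothesis Pfg : P = f * g.
Variables (v0 : V) (hv0 : v0 \in W).

Lemma f0 : f != 0.
Proof. by apply: contra (P_neq0 hv0); rewrite Pfg => /eqP ->; rewrite mul0r. Qed.
Lemma g0 : g != 0.
Proof. by apply: contra (P_neq0 hv0); rewrite Pfg => /eqP ->; rewrite mulr0. Qed.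

Lemma dsum k : degk n k P = (degk n k f + degk n k g)%N.
Proof. by rewrite Pfg degkM ?f0 ?g0. Qed.

Lemma excl (z : Var r W) : (0 < degk n (enum_rank z) f)%N -> degk n (enum_rank z) g = 0%N.
Proof. by have := degP_le1 z; rewrite dsum; lia. Qed.
Lemma excl' (z : Var r W) : (0 < degk n (enum_rank z) g)%N -> degk n (enum_rank z) f = 0%N.
Proof. by have := degP_le1 z; rewrite dsum; lia. Qed.

Lemma stepY a b (ha : a \in W) (hb : b \in W) : r a b ->
  (0 < degk n (kY a) f)%N -> (0 < degk n (kY b) f)%N.
Proof.
move=> rab fa; rewrite lt0n; apply/negP => /eqP fb.
have ga : degk n (kY a) g = 0%N by move: fa; rewrite (kYE ha); apply: excl.
have rWab : [rel x y | [&& x \in W, y \in W & r x y]] a b by rewrite /= ha hb rab.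
have [c [uc ac nab cc]] := @get_cycle V [rel x y | [&& x \in W, y \in W & r x y]] a b rWab (hsc hb ha).
have cyc : forall x, x \in c -> r x (next c x).
  by move=> x hx; have := next_cycle cc hx => /and3P[].
have cW : {subset c <= W}.
  by move=> x hx; have := next_cycle cc hx => /and3P[].
have nn : forall x, x \in c -> next c x != x.
  by move=> x hx; apply/eqP => e; have := cyc x hx; rewrite e irr.
have bc : b \in c by rewrite -nab mem_next.
have ab : a != b by apply/eqP => e; move: rab; rewrite e irr.
pose S (s t : C) := sv (Phi (fxc c) (fyc c a b s t)).
have hS : forall s t, ev n (S s t) P = (s - 1) * (t - 1) + (-1) ^+ (pc ha uc cW).
  by move=> s t; rewrite /S evP (detV3 ha uc cW cyc nn ac bc ab).
have agt : forall s t t' j, (j < n)%N -> j != kY b -> S s t j = S s t' j.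
  move=> s t t' j hj; rewrite (kYE hb); apply: sv_agree => //.
  apply: Phi_agree_y => x xb; rewrite /fyc (negbTE xb).
  by case: (x == a).
have ags : forall s s' t j, (j < n)%N -> j != kY a -> S s t j = S s' t j.
  move=> s s' t j hj; rewrite (kYE ha); apply: sv_agree => //.
  by apply: Phi_agree_y => x xa; rewrite /fyc (negbTE xa).
have R1 := rank1 fb ga (agt 1 1 (1 + 1)) (agt (1 + 1) 1 (1 + 1)) (ags 1 (1 + 1) 1) (ags 1 (1 + 1) (1 + 1)).
rewrite -Pfg !hS in R1.
set eps := (-1) ^+ _ in R1.
have E : ((1 - 1) * (1 - 1) + eps) * ((1 + 1 - 1) * (1 + 1 - 1) + eps)
   - ((1 - 1) * (1 + 1 - 1) + eps) * ((1 + 1 - 1) * (1 - 1) + eps) = eps :> C by ring.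
by move: E; rewrite R1 subrr => /esym/eqP; rewrite /eps signr_eq0.
Qed.

Lemma stepX (e0 : Edge r) (ha : (val e0).1 \in W) :
  (0 < degk n (kY (val e0).1) f)%N -> degk n (enum_rank (inl e0 : Var r W)) g = 0%N.
Proof.
move=> fa; apply/eqP; rewrite -leqn0 leqNgt; apply/negP => ge.
have fe := excl' ge.
have ga : degk n (kY (val e0).1) g = 0%N by move: fa; rewrite (kYE ha); apply: excl.
set a := (val e0).1 in ha fa ga *.
set b := (val e0).2.
have hab : r a b by have := valP e0.
have eab : val e0 = (a, b) by rewrite /a /b; case: (val e0).
pose S (s t : C) := sv (Phi (fun x y => if (x == a) && (y == b) then t else 0) (fun x => if x == a then s else 1)).
have hS : forall s t, ev n (S s t) P = s - t.
  by move=> s t; rewrite /S evP (detV2 ha hab).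
have agt : forall s t t' j, (j < n)%N -> j != enum_rank (inl e0 : Var r W) -> S s t j = S s t' j.
  move=> s t t' j hj; apply: sv_agree => //.
  apply: Phi_agree_x => x y; rewrite eab => hxy.
  have -> : (x == a) && (y == b) = false.
    by apply/negbTE; apply: contra hxy => /andP[/eqP -> /eqP ->].
  by [].
have ags : forall s s' t j, (j < n)%N -> j != kY a -> S s t j = S s' t j.
  move=> s s' t j hj; rewrite (kYE ha); apply: sv_agree => //.
  by apply: Phi_agree_y => x xa; rewrite /= (negbTE xa).
have R1 := rank1 fe ga (agt 0 0 1) (agt 1 0 1) (ags 0 1 0) (ags 0 1 1).
rewrite -Pfg !hS in R1.
move: R1; rewrite !subr0 !sub0r subrr mul0r mulr1 => /eqP.
by rewrite eq_sym oppr_eq0 oner_eq0.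
Qed.

Lemma propag p x : x \in W -> (0 < degk n (kY x) f)%N ->
  path [rel a b | [&& a \in W, b \in W & r a b]] x p -> (0 < degk n (kY (last x p)) f)%N.
Proof.
elim: p x => [//|y p IH] x hx fx /= /andP[/and3P[_ hy rxy] pth].
by apply: IH => //; apply: (stepY hx hy).
Qed.

Hypothesis f_v0 : (0 < degk n (kY v0) f)%N.

Lemma fW v : v \in W -> (0 < degk n (kY v) f)%N.
Proof.
move=> hv; have /connectP[p pth ->] := hsc hv0 hv.
exact: propag.
Qed.

Lemma g_unit : g \is a GRing.unit.
Proof.
apply: deg0_unit; last exact: g0.
move=> k hk; pose i := Ordinal hk.
have -> : k = enum_rank (enum_val i) by rewrite enum_valK.
case: (enum_val i) => [e|u].
  case: (boolP ((val e).1 \in W)) => ha.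
    by apply: stepX => //; apply: fW.
  have := degP_out (z := inl e) ha; rewrite dsum.
  lia.
have := fW (valP u); rewrite /kY valK => /excl.
by [].
Qed.

End Factor.

End Main.

Theorem main_irr (C : fieldType) (V : finType) (r : rel V) (W : {set V}) :
  irreflexive r -> W != set0 -> strongly_connected_set r W ->
  irreducible_elt (\det (LW r W C)).
Proof.
move=> irr /set0Pn[v0 hv0] hsc.
split.
- exact (P_neq0 C r hv0).
- apply/negP => hu; have := degY C r hv0; rewrite degk_unit //.
- move=> a b Pab.
  have := degY C r hv0; rewrite (dsum Pab hv0).
  case: (posnP (degk _ (kY r W v0) a)) => [a0|apos].
    rewrite a0 add0n => bpos; left.
    have Pba : \det (LW r W C) = b * a by rewrite Pab mulrC.
    exact: (g_unit irr hsc Pba hv0 bpos).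
  by move=> _; right; exact: (g_unit irr hsc Pab hv0 apos).
Qed.

Unset Implicit Arguments.
Set Strict Implicit.

Theorem lemma4p1 (C : closedFieldType) (hC : [pchar C] =i pred0)
  (V : finType) (r : rel V) (W : {set V}) :
  irreflexive r ->
  strongly_connected r ->
  W != set0 -> W != [set: V] ->
  strongly_connected_set r W ->
  irreducible_elt (\det (LW r W C)).
Proof.
move=> irr _ W0 _ hsc.
exact (@main_irr C V r W irr W0 hsc).
Qed.
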